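(* Assume (A1)–(A4). For the noisy ADMM iterates, let $E_k^\delta=\rho_1\|Ax_k^\delta-b^\delta\|^2+\rho_2\|Wx_k^\delta-y_k^\delta\|^2+\rho_2\|y_k^\delta-y_{k-1}^\delta\|^2$ for $k\ge1$. Then for all $k\ge1$ $$E_{k+1}^\delta-E_k^\delta\le-\rho_1\|A(x_{k+1}^\delta-x_k^\delta)\|^2-4c_0\|y_{k+1}^\delta-y_k^\delta\|^2.$$ Consequently $\{E_k^\delta\}$ is monotonically nonincreasing, and for all integers $1\le m<n$, $$\sum_{k=m}^{n-1}\|y_{k+1}^\delta-y_k^\delta\|^2\le\frac{1}{4c_0}E_m^\delta,\qquad (n-m)\rho_2\|y_n^\delta-y_{n-1}^\delta\|^2\le\sum_{k=m+1}^nE_k^\delta.$$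
   Context: $\mathcal X,\mathcal Y,\mathcal H$ are real Hilbert spaces. Standing assumptions: (A1) $A:\mathcal X\to\mathcal H$ is bounded linear. (A2) $f:\mathcal Y\to(-\infty,\infty]$ is proper, lower semicontinuous and strongly convex with constant $c_0>0$: $f(ty_1+(1-t)y_2)+c_0t(1-t)\|y_1-y_2\|^2\le tf(y_1)+(1-t)f(y_2)$ for all $y_1,y_2$, $t\in[0,1]$. (A3) $W:\mathscr D(W)\subset\mathcal X\to\mathcal Y$ is a densely defined closed linear operator. (A4) There is $c_1>0$ with $\|Ax\|^2+\|Wx\|^2\ge c_1\|x\|^2$ for all $x\in\mathscr D(W)$. Noisy ADMM: given $b^\delta\in\mathcal H$, fix $\rho_1,\rho_2>0$ and initial $y_0^\delta\in\mathcal Y$, $\lambda_0^\delta\in\mathcal H$, $\mu_0^\delta\in\mathcal Y$. For $k=0,1,\dots$: $x_{k+1}^\delta=\arg\min_{x\in\mathscr D(W)}\{\langle\lambda_k^\delta,Ax\rangle+\langle\mu_k^\delta,Wx\rangle+\frac{\rho_1}{2}\|Ax-b^\delta\|^2+\frac{\rho_2}{2}\|Wx-y_k^\delta\|^2\}$, $y_{k+1}^\delta=\arg\min_{y\in\mathcal Y}\{f(y)-\langle\mu_k^\delta,y\rangle+\frac{\rho_2}{2}\|Wx_{k+1}^\delta-y\|^2\}$, $\lambda_{k+1}^\delta=\lambda_k^\delta+\rho_1(Ax_{k+1}^\delta-b^\delta)$, $\mu_{k+1}^\delta=\mu_k^\delta+\rho_2(Wx_{k+1}^\delta-y_{k+1}^\delta)$.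 (These minimizers exist and are unique.) *)

(* Defs.v *)
From Stdlib Require Import Reals Lra List.
Import ListNotations.
Open Scope R_scope.

Record HilbertSpace := {
  hcar :> Type;
  hadd : hcar -> hcar -> hcar;
  hopp : hcar -> hcar;
  hzero : hcar;
  hscal : R -> hcar -> hcar;
  hinner : hcar -> hcar -> R;
  hadd_comm : forall x y, hadd x y = hadd y x;
  hadd_assoc : forall x y z, hadd x (hadd y z) = hadd (hadd x y) z;
  hadd_zero : forall x, hadd x hzero = x;
  hadd_opp : forall x, hadd x (hopp x) = hzero;
  hscal_one : forall x, hscal 1 x = x;
  hscal_assoc : forall a b x, hscal a (hscal b x) = hscal (a * b) x;
  hscal_distr_l : forall a x y, hscal a (hadd x y) = hadd (hscal a x) (hscal a y);
  hscal_distr_r : forall a b x, hscal (a + b) x = hadd (hscal a x) (hscal b x);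
  hinner_sym : forall x y, hinner x y = hinner y x;
  hinner_add_l : forall x y z, hinner (hadd x y) z = hinner x z + hinner y z;
  hinner_scal_l : forall a x y, hinner (hscal a x) y = a * hinner x y;
  hinner_pos : forall x, 0 <= hinner x x;
  hinner_def : forall x, hinner x x = 0 -> x = hzero;
  hcomplete : forall u : nat -> hcar,
    (forall eps, 0 < eps -> exists N, forall m n, (N <= m)%nat -> (N <= n)%nat ->
        sqrt (hinner (hadd (u m) (hopp (u n))) (hadd (u m) (hopp (u n)))) < eps) ->
    exists l, forall eps, 0 < eps -> exists N, forall n, (N <= n)%nat ->
        sqrt (hinner (hadd (u n) (hopp l)) (hadd (u n) (hopp l))) < eps
}.

Arguments hadd {h}. Arguments hopp {h}. Arguments hzero {h}.
Arguments hscal {h}. Arguments hinner {h}.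

Definition hsub {X : HilbertSpace} (x y : X) : X := hadd x (hopp y).
Definition hnorm {X : HilbertSpace} (x : X) : R := sqrt (hinner x x).

Definition hconv {X : HilbertSpace} (u : nat -> X) (l : X) : Prop :=
  forall eps, 0 < eps -> exists N, forall n, (N <= n)%nat -> hnorm (hsub (u n) l) < eps.

Definition bounded_linear {X Y : HilbertSpace} (A : X -> Y) : Prop :=
  (forall x y, A (hadd x y) = hadd (A x) (A y)) /\
  (forall a x, A (hscal a x) = hscal a (A x)) /\
  (exists C, forall x, hnorm (A x) <= C * hnorm x).

(** (A3) densely defined closed linear operator W : D(W) ⊂ X -> Y.
    The domain is the predicate D; values of W outside D are irrelevant. *)
Definition densely_defined_closed_linear {X Y : HilbertSpace}
    (D : X -> Prop) (W : X -> Y) : Prop :=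
  D hzero /\
  (forall x y, D x -> D y -> D (hadd x y)) /\
  (forall a x, D x -> D (hscal a x)) /\
  (forall x y, D x -> D y -> W (hadd x y) = hadd (W x) (W y)) /\
  (forall a x, D x -> W (hscal a x) = hscal a (W x)) /\
  (forall x eps, 0 < eps -> exists z, D z /\ hnorm (hsub x z) < eps) /\
  (forall (u : nat -> X) x y, (forall n, D (u n)) -> hconv u x ->
      hconv (fun n => W (u n)) y -> D x /\ W x = y).

Inductive ext := Fin (r : R) | PInf.

Definition ext_le (a b : ext) : Prop :=
  match a, b with
  | Fin r, Fin s => r <= s
  | _, PInf => True
  | PInf, Fin _ => False
  end.

Definition ext_plus_r (a : ext) (r : R) : ext :=
  match a with Fin s => Fin (s + r) | PInf => PInf end.

Definition proper_fun {Y : HilbertSpace} (f : Y -> ext) : Prop :=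
  exists y r, f y = Fin r.

Definition lsc {Y : HilbertSpace} (f : Y -> ext) : Prop :=
  forall y alpha, ext_le (Fin alpha) (f y) -> f y <> Fin alpha ->
    exists eps, 0 < eps /\ forall z, hnorm (hsub z y) < eps ->
      ext_le (Fin alpha) (f z) /\ f z <> Fin alpha.

(** strong convexity with constant c0 (convention: the inequality is
    trivial when the right-hand side is +oo) *)
Definition strongly_convex {Y : HilbertSpace} (f : Y -> ext) (c0 : R) : Prop :=
  forall y1 y2 r1 r2 t, f y1 = Fin r1 -> f y2 = Fin r2 -> 0 <= t <= 1 ->
    ext_le (ext_plus_r (f (hadd (hscal t y1) (hscal (1 - t) y2)))
                       (c0 * t * (1 - t) * (hnorm (hsub y1 y2)) ^ 2))
           (Fin (t * r1 + (1 - t) * r2)).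

(** sum_{k=m}^{n-1} g k *)
Definition rsum (g : nat -> R) (m n : nat) : R :=
  fold_right Rplus 0 (map g (seq m (n - m))).

(** The noisy ADMM recursion: x k (k >= 1), y, lam, mu are the iterates.
    x 0 is unused. Minimizers are characterised by the minimizing property
    (they exist and are unique). *)
Definition admm_iterates {X Y H : HilbertSpace} (A : X -> H) (D : X -> Prop)
    (W : X -> Y) (f : Y -> ext) (bd : H) (rho1 rho2 : R)
    (x : nat -> X) (y : nat -> Y) (lam : nat -> H) (mu : nat -> Y) : Prop :=
  forall k : nat,
    (D (x (S k)) /\
     forall z, D z ->
       hinner (lam k) (A (x (S k))) + hinner (mu k) (W (x (S k)))
       + rho1 / 2 * (hnorm (hsub (A (x (S k))) bd)) ^ 2
       + rho2 / 2 * (hnorm (hsub (W (x (S k))) (y k))) ^ 2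
       <= hinner (lam k) (A z) + hinner (mu k) (W z)
       + rho1 / 2 * (hnorm (hsub (A z) bd)) ^ 2
       + rho2 / 2 * (hnorm (hsub (W z) (y k))) ^ 2) /\
    (forall v,
       ext_le (ext_plus_r (f (y (S k)))
                 (- hinner (mu k) (y (S k))
                  + rho2 / 2 * (hnorm (hsub (W (x (S k))) (y (S k)))) ^ 2))
              (ext_plus_r (f v)
                 (- hinner (mu k) v
                  + rho2 / 2 * (hnorm (hsub (W (x (S k))) v)) ^ 2))) /\
    lam (S k) = hadd (lam k) (hscal rho1 (hsub (A (x (S k))) bd)) /\
    mu (S k) = hadd (mu k) (hscal rho2 (hsub (W (x (S k))) (y (S k)))).

(** E_k^delta, meaningful for k >= 1 *)
Definition admm_energy {X Y H : HilbertSpace} (A : X -> H) (W : X -> Y)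
    (bd : H) (rho1 rho2 : R) (x : nat -> X) (y : nat -> Y) (k : nat) : R :=
  rho1 * (hnorm (hsub (A (x k)) bd)) ^ 2
  + rho2 * (hnorm (hsub (W (x k)) (y k))) ^ 2
  + rho2 * (hnorm (hsub (y k) (y (k - 1)%nat))) ^ 2.

(* Main.v *)
Require Import Defs.
From Stdlib Require Import Reals List Lra Lia.
Open Scope R_scope.

Lemma hinner_add_r (X : HilbertSpace) (u v w : X) : hinner u (hadd v w) = hinner u v + hinner u w.
Proof. rewrite (hinner_sym X u (hadd v w)), (hinner_sym X u v), (hinner_sym X u w). apply hinner_add_l. Qed.

Lemma hinner_scal_r (X : HilbertSpace) a (u v : X) : hinner u (hscal a v) = a * hinner u v.
Proof. rewrite (hinner_sym X u), (hinner_sym X u v). apply hinner_scal_l. Qed.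

Lemma hinner_zero_l (X : HilbertSpace) (v : X) : hinner hzero v = 0.
Proof.
  assert (E: hinner (hadd (@hzero X) hzero) v = hinner hzero v) by (rewrite hadd_zero; reflexivity).
  rewrite hinner_add_l in E. lra.
Qed.

Lemma hinner_opp_l (X : HilbertSpace) (u v : X) : hinner (hopp u) v = - hinner u v.
Proof.
  assert (E: hinner (hadd u (hopp u)) v = 0) by (rewrite hadd_opp; apply hinner_zero_l).
  rewrite hinner_add_l in E. lra.
Qed.

Lemma hinner_opp_r (X : HilbertSpace) (u v : X) : hinner u (hopp v) = - hinner u v.
Proof. rewrite (hinner_sym X u), (hinner_sym X u v). apply hinner_opp_l. Qed.

Lemma hnorm_sq (X : HilbertSpace) (u : X) : hnorm u ^ 2 = hinner u u.
Proof. unfold hnorm. apply pow2_sqrt. apply hinner_pos. Qed.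

Lemma hcancel (X : HilbertSpace) (u : X) : u = hadd u u -> u = hzero.
Proof.
  intro E.
  assert (E2 : hadd u (hopp u) = hadd (hadd u u) (hopp u)) by (rewrite <- E; reflexivity).
  rewrite <- hadd_assoc, !hadd_opp, hadd_zero in E2. symmetry; exact E2.
Qed.

Lemma inv_unique (X : HilbertSpace) (w u : X) : hadd w u = hzero -> w = hopp u.
Proof.
  intro E. rewrite <- (hadd_zero X w), <- (hadd_opp X u), hadd_assoc, E, hadd_comm, hadd_zero.
  reflexivity.
Qed.

Lemma hscal0 (X : HilbertSpace) (u : X) : hscal 0 u = hzero.
Proof. apply hcancel. rewrite <- hscal_distr_r, Rplus_0_r. reflexivity. Qed.

Lemma hopp_scal (X : HilbertSpace) (u : X) : hopp u = hscal (-1) u.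
Proof.
  symmetry; apply inv_unique. rewrite <- (hscal_one X u) at 2.
  rewrite <- hscal_distr_r. replace (-1 + 1) with 0 by ring. apply hscal0.
Qed.

Lemma lin_sub (X Y : HilbertSpace) (A : X -> Y)
  (Hadd : forall x y, A (hadd x y) = hadd (A x) (A y))
  (Hsc : forall a x, A (hscal a x) = hscal a (A x)) u v :
  A (hsub u v) = hsub (A u) (A v).
Proof. unfold hsub. rewrite Hadd, !hopp_scal, Hsc. reflexivity. Qed.

Ltac hexp := unfold hsub; repeat progress (rewrite ?hnorm_sq, ?hinner_add_l, ?hinner_add_r,
  ?hinner_scal_l, ?hinner_scal_r, ?hinner_opp_l, ?hinner_opp_r).

Ltac hsym2 a b := try rewrite (hinner_sym _ b a).
Ltac hsym4 a b c d := hsym2 a b; hsym2 a c; hsym2 a d; hsym2 b c; hsym2 b d; hsym2 c d.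
Ltac hsym6 a b c d e g := hsym2 a b; hsym2 a c; hsym2 a d; hsym2 a e; hsym2 a g;
  hsym2 b c; hsym2 b d; hsym2 b e; hsym2 b g; hsym2 c d; hsym2 c e; hsym2 c g;
  hsym2 d e; hsym2 d g; hsym2 e g.

Lemma phi_exp (X : HilbertSpace) (l a p b : X) (r t : R) :
  hinner l (hadd a (hscal t p)) + r/2 * (hnorm (hsub (hadd a (hscal t p)) b))^2
  = hinner l a + r/2 * (hnorm (hsub a b))^2
    + t * (hinner l p + r * hinner (hsub a b) p) + t^2 * (r/2 * (hnorm p)^2).
Proof. hexp. hsym4 l a p b. lra. Qed.

Lemma lim0 (G Q : R) : 0 <= Q -> (forall t, 0 < t <= 1 -> 0 <= t*G + t^2*Q) -> 0 <= G.
Proof.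
  intros HQ H. destruct (Rle_or_lt 0 G) as [|HG]; [assumption|exfalso].
  set (t := Rmin 1 (- G / (2 * (Q + 1)))).
  assert (Ht0 : 0 < t).
  { unfold t. apply Rmin_glb_lt; [lra|]. apply Rdiv_lt_0_compat; lra. }
  assert (Ht1 : t <= 1) by (unfold t; apply Rmin_l).
  assert (Ht2 : t * (2 * (Q + 1)) <= - G).
  { assert (t <= - G / (2 * (Q + 1))) by (unfold t; apply Rmin_r).
    apply (Rmult_le_compat_r (2*(Q+1))) in H0; [|lra].
    unfold Rdiv in H0. rewrite Rmult_assoc, Rinv_l in H0; lra. }
  specialize (H t (conj Ht0 Ht1)).
  assert (t * Q <= - G / 2) by nra.
  assert (t * (G + t * Q) < 0) by nra.
  nra.
Qed.

Lemma fo0 (g q : R) : 0 <= q -> (forall t, 0 <= t*g + t^2*q) -> g = 0.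
Proof.
  intros Hq H. destruct (Req_dec g 0) as [|Hg]; [assumption|exfalso].
  specialize (H (- g / (q + 1))).
  replace (- g / (q + 1) * g + (- g / (q + 1)) ^ 2 * q) with (- (g^2) / ((q+1)^2)) in H
    by (field; lra).
  assert (0 < g^2) by (pose proof (Rsqr_pos_lt g Hg); unfold Rsqr in *; nra).
  assert (0 < (q+1)^2) by (apply pow_lt; lra).
  assert (0 < g^2 / (q+1)^2) by (apply Rdiv_lt_0_compat; auto).
  unfold Rdiv in *. lra.
Qed.

Lemma subgrad (Y : HilbertSpace) (f : Y -> ext) c0 (Hconv : strongly_convex f c0)
  (mu w ys : Y) (rho fy : R) (Hr : 0 < rho) (Hc0 : 0 < c0) (Hfy : f ys = Fin fy)
  (Hmin : forall v, ext_le (ext_plus_r (f ys) (- hinner mu ys + rho / 2 * (hnorm (hsub w ys)) ^ 2))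
          (ext_plus_r (f v) (- hinner mu v + rho / 2 * (hnorm (hsub w v)) ^ 2)))
  (v : Y) (fv : R) (Hfv : f v = Fin fv) :
  fy + hinner (hadd mu (hscal rho (hsub w ys))) (hsub v ys) + c0 * (hnorm (hsub v ys)) ^ 2 <= fv.
Proof.
  set (G := fv - (fy + hinner (hadd mu (hscal rho (hsub w ys))) (hsub v ys) + c0 * (hnorm (hsub v ys)) ^ 2)).
  cut (0 <= G); [unfold G; lra|].
  apply (lim0 G ((c0 + rho/2) * (hnorm (hsub v ys)) ^ 2)).
  { pose proof (pow2_ge_0 (hnorm (hsub v ys))). nra. }
  intros t Ht.
  pose proof (Hconv v ys fv fy t Hfv Hfy ltac:(lra)) as Hc.
  destruct (f (hadd (hscal t v) (hscal (1 - t) ys))) as [ft|] eqn:Eft; [|simpl in Hc; contradiction].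
  cbn [ext_le ext_plus_r] in Hc.
  pose proof (Hmin (hadd (hscal t v) (hscal (1 - t) ys))) as Hm.
  rewrite Hfy, Eft in Hm. cbn [ext_le ext_plus_r] in Hm.
  unfold G. clear G Hmin. revert Hc Hm. hexp. hsym4 mu w v ys. intros. lra.
Qed.

Lemma tele (g e : nat -> R) c :
  (forall k, (1 <= k)%nat -> c * g k <= e k - e (S k)) ->
  forall len m, (1 <= m)%nat ->
  c * fold_right Rplus 0 (map g (seq m len)) <= e m - e (m + len)%nat.
Proof.
  intros Hs len. induction len as [|len IH]; intros m Hm; simpl.
  - rewrite Nat.add_0_r. lra.
  - specialize (IH (S m) ltac:(lia)). specialize (Hs m Hm).
    replace (m + S len)%nat with (S m + len)%nat by lia. lra.
Qed.

Lemma lowsum (g : nat -> R) c : forall len m,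
  (forall k, (m <= k < m + len)%nat -> c <= g k) ->
  INR len * c <= fold_right Rplus 0 (map g (seq m len)).
Proof.
  intro len. induction len as [|len IH]; intros m Hk; cbn [seq map fold_right].
  - simpl; lra.
  - rewrite S_INR. specialize (IH (S m) ltac:(intros; apply Hk; lia)).
    specialize (Hk m ltac:(lia)). lra.
Qed.

Theorem lemma2p9 (X Y H : HilbertSpace) (A : X -> H) (f : Y -> ext)
  (D : X -> Prop) (W : X -> Y) (c0 c1 : R)
  (HA1 : bounded_linear A)
  (Hc0 : 0 < c0) (Hproper : proper_fun f) (Hlsc : lsc f)
  (Hconv : strongly_convex f c0)
  (HA3 : densely_defined_closed_linear D W)
  (Hc1 : 0 < c1)
  (HA4 : forall x, D x -> (hnorm (A x)) ^ 2 + (hnorm (W x)) ^ 2 >= c1 * (hnorm x) ^ 2)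
  (bd : H) (rho1 rho2 : R) (Hrho1 : 0 < rho1) (Hrho2 : 0 < rho2)
  (x : nat -> X) (y : nat -> Y) (lam : nat -> H) (mu : nat -> Y)
  (Hiter : admm_iterates A D W f bd rho1 rho2 x y lam mu) :
  let E := admm_energy A W bd rho1 rho2 x y in
  (forall k, (1 <= k)%nat ->
     E (S k) - E k <= - rho1 * (hnorm (A (hsub (x (S k)) (x k)))) ^ 2
                      - 4 * c0 * (hnorm (hsub (y (S k)) (y k))) ^ 2) /\
  (forall k, (1 <= k)%nat -> E (S k) <= E k) /\
  (forall m n, (1 <= m)%nat -> (m < n)%nat ->
     rsum (fun k => (hnorm (hsub (y (S k)) (y k))) ^ 2) m n <= / (4 * c0) * E m /\
     INR (n - m) * rho2 * (hnorm (hsub (y n) (y (n - 1)%nat))) ^ 2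
       <= rsum E (S m) (S n)).
Proof.
  intros E.
  destruct HA1 as [Aadd [Asc _]].
  destruct HA3 as [D0 [Dadd [Dsc [Wadd [Wsc _]]]]].
  assert (Hfin : forall k, exists r, f (y (S k)) = Fin r).
  { intro k. destruct Hproper as [v0 [r0 Hr0]].
    destruct (Hiter k) as [_ [Hm _]]. specialize (Hm v0). rewrite Hr0 in Hm.
    destruct (f (y (S k))) as [r|]; [eauto | simpl in Hm; contradiction]. }
  assert (FO : forall k u, D u ->
    hinner (lam k) (A u) + rho1 * hinner (hsub (A (x (S k))) bd) (A u)
    + hinner (mu k) (W u) + rho2 * hinner (hsub (W (x (S k))) (y k)) (W u) = 0).
  { intros k u Du. destruct (Hiter k) as [[Dx Hm] _].
    apply (fo0 _ (rho1/2 * (hnorm (A u))^2 + rho2/2 * (hnorm (W u))^2)).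
    - pose proof (pow2_ge_0 (hnorm (A u))). pose proof (pow2_ge_0 (hnorm (W u))). nra.
    - intro t. specialize (Hm (hadd (x (S k)) (hscal t u)) (Dadd _ _ Dx (Dsc _ _ Du))).
      rewrite Aadd, Asc, (Wadd _ _ Dx (Dsc _ _ Du)), (Wsc _ _ Du) in Hm.
      pose proof (phi_exp _ (lam k) (A (x (S k))) (A u) bd rho1 t).
      pose proof (phi_exp _ (mu k) (W (x (S k))) (W u) (y k) rho2 t).
      lra. }
  assert (SG : forall k v fv fy, f v = Fin fv -> f (y (S k)) = Fin fy ->
    fy + hinner (hadd (mu k) (hscal rho2 (hsub (W (x (S k))) (y (S k))))) (hsub v (y (S k)))
    + c0 * (hnorm (hsub v (y (S k)))) ^ 2 <= fv).
  { intros k v fv fy Hv Hy. destruct (Hiter k) as [_ [Hm _]].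
    exact (subgrad Y f c0 Hconv (mu k) (W (x (S k))) (y (S k)) rho2 fy Hrho2 Hc0 Hy Hm v fv Hv). }
  assert (Enn : forall k, 0 <= E k).
  { intro k. unfold E, admm_energy.
    pose proof (pow2_ge_0 (hnorm (hsub (A (x k)) bd))).
    pose proof (pow2_ge_0 (hnorm (hsub (W (x k)) (y k)))).
    pose proof (pow2_ge_0 (hnorm (hsub (y k) (y (k - 1)%nat)))). nra. }
  assert (P1 : forall k, (1 <= k)%nat ->
     E (S k) - E k <= - rho1 * (hnorm (A (hsub (x (S k)) (x k)))) ^ 2
                      - 4 * c0 * (hnorm (hsub (y (S k)) (y k))) ^ 2).
  { intros k Hk. destruct k as [|j]; [lia|].
    destruct (Hfin j) as [f1 Hf1]. destruct (Hfin (S j)) as [f2 Hf2].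
    pose proof (SG (S j) (y (S j)) f1 f2 Hf1 Hf2) as S1.
    pose proof (SG j (y (S (S j))) f2 f1 Hf2 Hf1) as S2.
    destruct (Hiter j) as [[Dx1 _] [_ [Hl1 Hm1]]].
    destruct (Hiter (S j)) as [[Dx2 _] [_ [Hl2 Hm2]]].
    pose proof (FO (S j) _ Dx1) as F1. pose proof (FO (S j) _ Dx2) as F2.
    pose proof (FO j _ Dx1) as F3. pose proof (FO j _ Dx2) as F4.
    rewrite Hl1, Hm1 in F1, F2. rewrite Hm1 in S1.
    pose proof (pow2_ge_0 (hnorm (hsub (hadd (hsub (W (x (S (S j)))) (W (x (S j)))) (y j)) (y (S j))))) as Sq.
    assert (Sq2 : 0 <= rho2 * (hnorm (hsub (hadd (hsub (W (x (S (S j)))) (W (x (S j)))) (y j)) (y (S j)))) ^ 2) by nra.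
    clear Sq.
    unfold E, admm_energy. rewrite (lin_sub _ _ A Aadd Asc).
    replace (S (S j) - 1)%nat with (S j) by lia. replace (S j - 1)%nat with j by lia.
    clear Hl1 Hm1 Hl2 Hm2 Hiter FO SG Hfin Enn E HA4 Hf1 Hf2.
    revert F1 F2 F3 F4 S1 S2 Sq2. hexp.
    hsym4 (lam j) (A (x (S (S j)))) (A (x (S j))) bd.
    hsym6 (mu j) (W (x (S (S j)))) (W (x (S j))) (y (S (S j))) (y (S j)) (y j).
    intros. lra. }
  assert (P2 : forall k, (1 <= k)%nat -> E (S k) <= E k).
  { intros k Hk. specialize (P1 k Hk).
    pose proof (pow2_ge_0 (hnorm (A (hsub (x (S k)) (x k))))).
    pose proof (pow2_ge_0 (hnorm (hsub (y (S k)) (y k)))). nra. }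
  split; [exact P1|]. split; [exact P2|].
  intros m n Hm Hmn. split.
  - assert (T := tele (fun k => (hnorm (hsub (y (S k)) (y k))) ^ 2) E (4 * c0)).
    assert (Hs : forall k, (1 <= k)%nat ->
      4 * c0 * (hnorm (hsub (y (S k)) (y k))) ^ 2 <= E k - E (S k)).
    { intros k Hk. specialize (P1 k Hk).
      pose proof (pow2_ge_0 (hnorm (A (hsub (x (S k)) (x k))))). nra. }
    specialize (T Hs (n - m)%nat m Hm).
    replace (m + (n - m))%nat with n in T by lia.
    unfold rsum. pose proof (Enn n).
    apply (Rmult_le_reg_l (4 * c0)); [lra|].
    rewrite <- Rmult_assoc, Rinv_r, Rmult_1_l; lra.
  - assert (Mono : forall d k, (1 <= k)%nat -> E (k + d)%nat <= E k).
    { intro d. induction d as [|d IH]; intros k Hk.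
      - rewrite Nat.add_0_r. lra.
      - replace (k + S d)%nat with (S (k + d)) by lia.
        pose proof (P2 (k + d)%nat ltac:(lia)). specialize (IH k Hk). lra. }
    assert (En : rho2 * (hnorm (hsub (y n) (y (n - 1)%nat))) ^ 2 <= E n).
    { unfold E, admm_energy.
      pose proof (pow2_ge_0 (hnorm (hsub (A (x n)) bd))).
      pose proof (pow2_ge_0 (hnorm (hsub (W (x n)) (y n)))). nra. }
    unfold rsum. change (S n - S m)%nat with (n - m)%nat.
    rewrite Rmult_assoc. apply lowsum.
    intros k Hk. pose proof (Mono (n - k)%nat k ltac:(lia)) as Mk.
    replace (k + (n - k))%nat with n in Mk by lia. lra.
Qed.
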